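(* Let $n$ be a positive integer and $i,k\in\{1,\ldots,n\}$. Let $H\sim\text{Hyp}(n,i,k)$ and $X\sim\text{Bin}(k,\frac{i}{n})$, and assume that: (1) $\frac{ik}{n}\in (m-1, m]$ for some integer $m\in \{2,3,\ldots, \min\{i,k\}-2\}$; (2) $\frac{(n-i)(n-k)}{n}> 1$. Then \[ \frac{\mathbb{P}(H=m)}{\mathbb{P}(X=m)} \,\ge\, \frac{e^{-1/8}}{2} \cdot \sqrt{\frac{i(n-i)(n-k)}{(i-m)(n-i-k+m)n}}. \]
   Context: $\text{Hyp}(n,i,k)$ denotes the hypergeometric distribution: the number of black marbles in a sample without replacement of size $k$ from an urn with $i$ black and $n-i$ white marbles, i.e. $\mathbb{P}(H=j)=\binom{i}{j}\binom{n-i}{k-j}/\binom{n}{k}$. $\text{Bin}(k,p)$ denotes the binomial distribution with $k$ trials and success probability $p$. *)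

(* Defs.v *)
(* Stdlib reals world; binomial coefficients from MathComp's 'C (nat-valued,
   which is 0 when the lower index exceeds the upper one). *)
From Stdlib Require Import Reals.
From mathcomp Require Import ssreflect ssrbool ssrnat binomial.

Open Scope R_scope.

(* P(H = j) for H ~ Hyp(n, i, k): sample of size k without replacement from an
   urn with i black and n - i white marbles. *)
Definition hyp_pmf (n i k j : nat) : R :=
  INR ('C(i, j) * 'C(n - i, k - j))%N / INR 'C(n, k).

Definition bin_pmf (k : nat) (p : R) (j : nat) : R :=
  INR 'C(k, j) * p ^ j * (1 - p) ^ (k - j).

(* Main.v *)
Require Import Defs.
From Stdlib Require Import Reals.
From mathcomp Require Import ssreflect ssrbool ssrnat binomial.
From Stdlib Require Import Lra Lia Psatz.
From Coquelicot Require Import Coquelicot.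
From mathcomp Require Import zify.
Open Scope R_scope.

Lemma INR_muln (a b : nat) : INR (a * b)%N = INR a * INR b.
Proof. by rewrite -mult_INR. Qed.

Lemma fact_ne0 a : INR a`! <> 0.
Proof. apply not_0_INR. have := fact_gt0 a. lia. Qed.

Lemma binR (a b : nat) : (b <= a)%N ->
  INR 'C(a, b) = INR a`! / (INR b`! * INR (a - b)`!).
Proof.
move=> H. rewrite -(bin_fact H) !INR_muln. field. split; apply fact_ne0.
Qed.

Lemma powdiv (a b : R) (N : nat) : b <> 0 -> (a / b) ^ N = a ^ N / b ^ N.
Proof. move=> Hb. rewrite /Rdiv Rpow_mult_distr pow_inv //. Qed.

Lemma F_eq (x m y l : nat) : (1 <= x)%N -> (1 <= y)%N ->
 hyp_pmf (x+m+y+l) (x+m) (m+l) m / bin_pmf (m+l) (INR (x+m) / INR (x+m+y+l)) m =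
 INR (x+m)`! * INR (y+l)`! * INR (x+y)`! * (INR (x+m+y+l) ^ m * INR (x+m+y+l) ^ l) /
   (INR x`! * INR y`! * INR (x+m+y+l)`! * INR (x+m) ^ m * INR (y+l) ^ l).
Proof.
move=> Hx Hy.
rewrite /hyp_pmf /bin_pmf.
have -> : (x + m + y + l - (x + m) = y + l)%N by lia.
have -> : (m + l - m = l)%N by lia.
rewrite INR_muln !binR; try lia.
have -> : (x + m - m = x)%N by lia.
have -> : (y + l - l = y)%N by lia.
have -> : (x + m + y + l - (m + l) = x + y)%N by lia.
have -> : (m + l - m = l)%N by lia.
have HN : INR (x + m + y + l) <> 0 by apply not_0_INR; lia.
have -> : 1 - INR (x + m) / INR (x + m + y + l) = INR (y + l) / INR (x + m + y + l).
  have HN' := HN. rewrite !plus_INR in HN'. rewrite !plus_INR. field. exact HN'.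
rewrite !powdiv //.
have HX : INR (x + m) ^ m <> 0 by apply pow_nonzero, not_0_INR; lia.
have HY : INR (y + l) ^ l <> 0 by apply pow_nonzero, not_0_INR; lia.
have HNm : INR (x + m + y + l) ^ m <> 0 by apply pow_nonzero.
have HNl : INR (x + m + y + l) ^ l <> 0 by apply pow_nonzero.
move: HX HY HNm HNl.
move: (INR (x + m) ^ m) (INR (y + l) ^ l) (INR (x + m + y + l) ^ m) (INR (x + m + y + l) ^ l) => A B C D HA HB HC HD.
have := fact_ne0. move=> F.
field. repeat split; auto.
Qed.

Ltac nz := repeat match goal with |- _ * _ <> 0 => apply Rmult_integral_contrapositive; split end.

Definition Phi (a : nat) : R := INR (a`!) ^ 2 * exp (2 * INR a) / INR a ^ (2*a+1).

Lemma mono0 (f df : R -> R) (y:R) : 0 <= y ->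
  (forall x, 0 <= x -> is_derive f x (df x)) ->
  (forall x, 0 <= x -> 0 <= df x) -> f 0 <= f y.
Proof.
intros Hy Hd Hp.
destruct (MVT_gen f 0 y df) as [c [Hc E]].
- intros x Hx. apply Hd. rewrite Rmin_left in Hx; lra.
- intros x Hx. apply continuity_pt_filterlim. apply: ex_derive_continuous.
  eexists. apply Hd. rewrite Rmin_left in Hx; lra.
- rewrite Rmin_left in Hc; try lra. rewrite Rmax_right in Hc; try lra.
  assert (0 <= df c) by (apply Hp; lra). nra.
Qed.

Lemma ln_up5 (u : R) : 0 <= u ->
  ln (1 + u) <= u - u^2/2 + u^3/3 - u^4/4 + u^5/5.
Proof.
intros Hu.
set (f := fun x => x - x^2/2 + x^3/3 - x^4/4 + x^5/5 - ln (1 + x)).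
assert (f 0 <= f u).
{ apply (mono0 f (fun x => x^5 / (1+x))); auto.
  - intros x Hx. unfold f. auto_derive. lra. field. lra.
  - intros x Hx. apply Rdiv_le_0_compat. apply pow_le. lra. lra. }
unfold f in H. rewrite Rplus_0_r ln_1 in H. lra.
Qed.

Lemma ln_lo (u : R) : 0 <= u -> 2 * u / (2 + u) <= ln (1 + u).
Proof.
intros Hu.
set (f := fun x => ln (1 + x) - 2 * x / (2 + x)).
assert (f 0 <= f u).
{ apply (mono0 f (fun x => x^2 / ((1+x)*(2+x)^2))); auto.
  - intros x Hx. unfold f. auto_derive. lra. field. lra.
  - intros x Hx. apply Rdiv_le_0_compat. apply pow_le. lra.
    apply Rmult_lt_0_compat. lra. apply pow_lt. lra. }
unfold f in H. rewrite Rplus_0_r ln_1 in H. lra.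
Qed.


Lemma Phi_step (a : nat) : (1 <= a)%N ->
  Phi a.+1 * ((INR a + 1) / INR a) ^ (2*a+1) = Phi a * exp 2.
Proof.
move=> Ha.
have Ha' : 1 <= INR a by (apply: (le_INR 1); apply/leP).
rewrite /Phi factS INR_muln S_INR.
have -> : (2 * a.+1 + 1 = (2*a+1) + 2)%N by lia.
rewrite pow_add.
have -> : 2 * (INR a + 1) = 2 * INR a + 2 by ring.
rewrite exp_plus.
have Hd : forall x y (N:nat), y <> 0 -> (x / y) ^ N = x ^ N / y ^ N.
{ move=> x y N Hy. rewrite /Rdiv Rpow_mult_distr pow_inv //. }
rewrite Hd; last lra.
move: (pow_nonzero (INR a + 1) (2*a+1)) (pow_nonzero (INR a) (2*a+1)).
move: ((INR a + 1) ^ (2 * a + 1)) (INR a ^ (2 * a + 1)) => P Q HP HQ.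
have HP' : P <> 0 by apply HP; lra.
have HQ' : Q <> 0 by apply HQ; lra.
field; repeat split; lra.
Qed.

Lemma exp_mono (x y : R) : x <= y -> exp x <= exp y.
Proof. move=> H. case: (Rle_lt_or_eq_dec _ _ H) => [h|->]; last lra.
left. by apply exp_increasing. Qed.

Lemma Tpow (A : R) (N : nat) : 0 < A ->
  ((A + 1) / A) ^ N = exp (INR N * ln (1 + / A)).
Proof.
move=> HA.
have HiA : 0 < / A by apply Rinv_0_lt_compat.
have -> : (A + 1) / A = 1 + / A by field; lra.
rewrite -ln_pow; last lra.
rewrite exp_ln //. apply pow_lt. lra.
Qed.

Lemma T_lo (a : nat) : (1 <= a)%N -> exp 2 <= ((INR a + 1) / INR a) ^ (2*a+1).
Proof.
move=> Ha.
have HA : 1 <= INR a by (apply: (le_INR 1); apply/leP).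
rewrite Tpow; last lra.
apply exp_mono.
have HiA : 0 < / INR a by apply Rinv_0_lt_compat; lra.
have := ln_lo (/ INR a) (Rlt_le _ _ HiA).
have -> : INR (2 * a + 1) = 2 * INR a + 1.
  by rewrite plus_INR mult_INR /=; ring.
move=> H.
have E : 2 * / INR a / (2 + / INR a) * (2 * INR a + 1) = 2 by field; lra.
have Hp : 0 <= 2 * INR a + 1 by lra.
nra.
Qed.

Lemma T_hi (a : nat) : (2 <= a)%N ->
  ((INR a + 1) / INR a) ^ (2*a+1) <= exp (2 + / (4 * INR a * (INR a + 1))).
Proof.
move=> Ha.
have HA : 2 <= INR a by (apply: (le_INR 2); apply/leP).
rewrite Tpow; last lra.
apply exp_mono.
have HiA : 0 < / INR a by apply Rinv_0_lt_compat; lra.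
have := ln_up5 (/ INR a) (Rlt_le _ _ HiA).
have -> : INR (2 * a + 1) = 2 * INR a + 1.
  by rewrite plus_INR mult_INR /=; ring.
set u := / INR a.
have Ea : INR a = / u by rewrite /u Rinv_inv.
have Hu : u <= 1/2. { rewrite /u. apply Rle_trans with (/ 2). apply Rinv_le_contravar; lra. lra. }
rewrite Ea. move=> H.
have Hu0 : 0 < u by [].
have Hp : 0 <= 2 * / u + 1 by have := Rinv_0_lt_compat u Hu0; lra.
apply Rle_trans with ((2 * / u + 1) * (u - u ^ 2 / 2 + u ^ 3 / 3 - u ^ 4 / 4 + u ^ 5 / 5)).
  by apply Rmult_le_compat_l.
have -> : (2 * / u + 1) * (u - u ^ 2 / 2 + u ^ 3 / 3 - u ^ 4 / 4 + u ^ 5 / 5) =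
  2 + u^2/6 - u^3/6 + 3*u^4/20 + u^5/5 by field; lra.
have -> : / (4 * / u * (/ u + 1)) = u^2 / (4 * (1 + u)) by field; lra.
have K : (1+u)*(1/6 - u/6 + 3*u^2/20 + u^3/5) <= 1/4 by nra.
have K2 : 1/6 - u/6 + 3*u^2/20 + u^3/5 <= 1/(4*(1+u)).
  apply (Rmult_le_reg_l (1+u)). lra. field_simplify; lra.
have : u^2 * (1/6 - u/6 + 3*u^2/20 + u^3/5) <= u^2 * (1/(4*(1+u))).
  apply Rmult_le_compat_l; nra.
have -> : u ^ 2 * (1 / (4 * (1 + u))) = u ^ 2 / (4 * (1 + u)) by field; lra.
lra.
Qed.

Lemma Phi_pos (a : nat) : (1 <= a)%N -> 0 < Phi a.
Proof.
move=> Ha. have HA : 1 <= INR a by (apply: (le_INR 1); apply/leP).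
rewrite /Phi. apply Rdiv_lt_0_compat; last by apply pow_lt; lra.
apply Rmult_lt_0_compat; last by apply exp_pos.
apply pow_lt. apply lt_0_INR. apply/ltP. by rewrite fact_gt0.
Qed.

Lemma Phi_dec (a : nat) : (1 <= a)%N -> Phi a.+1 <= Phi a.
Proof.
move=> Ha. have HA : 1 <= INR a by (apply: (le_INR 1); apply/leP).
have E := Phi_step a Ha. have L := T_lo a Ha.
have P1 := Phi_pos a Ha. have P2 := Phi_pos a.+1 (leqW Ha).
have Hx := exp_pos 2.
set T := ((INR a + 1) / INR a) ^ (2 * a + 1) in E L.
have : Phi a.+1 * exp 2 <= Phi a * exp 2 by nra.
move=> H. apply (Rmult_le_reg_r (exp 2)); lra.
Qed.

Lemma Phi_inc (a : nat) : (2 <= a)%N ->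
  Phi a * exp (/ (4 * (INR a + 1)) - / (4 * INR a)) <= Phi a.+1.
Proof.
move=> Ha. have HA : 2 <= INR a by (apply: (le_INR 2); apply/leP).
have Ha1 : (1 <= a)%N by apply: leq_trans Ha.
have E := Phi_step a Ha1. have L := T_hi a Ha.
have P1 := Phi_pos a Ha1. have P2 := Phi_pos a.+1 (leqW Ha1).
have -> : / (4 * (INR a + 1)) - / (4 * INR a) = 2 - (2 + / (4 * INR a * (INR a + 1))).
  field; lra.
rewrite exp_plus exp_Ropp.
set T := ((INR a + 1) / INR a) ^ (2 * a + 1) in E L.
set U := exp (2 + / (4 * INR a * (INR a + 1))) in L *.
have HU : 0 < U by apply exp_pos.
have : Phi a * exp 2 <= Phi a.+1 * U by nra.
move=> H. apply (Rmult_le_reg_r U) => //. field_simplify; lra.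
Qed.

Lemma Phi_dec_chain (a j : nat) : (1 <= a)%N -> Phi (a + j) <= Phi a.
Proof.
move=> Ha. elim: j => [|j IH]; first by rewrite addn0; lra.
rewrite addnS. apply Rle_trans with (Phi (a + j)) => //.
apply Phi_dec. by apply: leq_trans Ha (leq_addr _ _).
Qed.

Lemma Phi_inc_chain (a j : nat) : (2 <= a)%N ->
  Phi a * exp (/ (4 * INR (a + j)) - / (4 * INR a)) <= Phi (a + j).
Proof.
move=> Ha. have HA : 2 <= INR a by (apply: (le_INR 2); apply/leP).
elim: j => [|j IH].
  rewrite addn0 Rminus_diag exp_0 Rmult_1_r; lra.
rewrite addnS.
have Haj : (2 <= a + j)%N by apply: leq_trans Ha (leq_addr _ _).
have := Phi_inc (a + j) Haj. rewrite S_INR.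
move=> H.
apply Rle_trans with (Phi (a + j) * exp (/ (4 * (INR (a + j) + 1)) - / (4 * INR (a + j)))) => //.
have -> : / (4 * (INR (a + j) + 1)) - / (4 * INR a) =
   (/ (4 * INR (a + j)) - / (4 * INR a)) + (/ (4 * (INR (a + j) + 1)) - / (4 * INR (a + j))) by ring.
rewrite exp_plus -Rmult_assoc.
apply Rmult_le_compat_r => //. left; apply exp_pos.
Qed.

Lemma Phi_inc_chain' (a j : nat) : (2 <= a)%N ->
  Phi a * exp (- / (4 * INR a)) <= Phi (a + j).
Proof.
move=> Ha. have HA : 2 <= INR a by (apply: (le_INR 2); apply/leP).
apply Rle_trans with (Phi a * exp (/ (4 * INR (a + j)) - / (4 * INR a))); last by apply Phi_inc_chain.
apply Rmult_le_compat_l. left; apply Phi_pos; by apply: leq_trans Ha.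
apply exp_mono.
have : 0 < INR (a + j) by rewrite plus_INR; have := pos_INR j; lra.
move=> h. have := Rinv_0_lt_compat _ (Rmult_lt_0_compat 4 _ ltac:(lra) h). lra.
Qed.

Lemma bern (s : R) (x : nat) : 0 <= s -> 1 + INR x * s <= (1 + s) ^ x.
Proof.
move=> Hs. elim: x => [|x IH]; first by simpl; lra.
rewrite S_INR /=. have := pos_INR x. nra.
Qed.

Lemma bonf (t : R) (y : nat) : 0 <= t <= 1 ->
  1 - INR y * t + INR y * (INR y - 1) / 2 * t^2
    - INR y * (INR y - 1) * (INR y - 2) / 6 * t^3 <= (1 - t) ^ y.
Proof.
move=> Ht. elim: y => [|y IH]; first by simpl; lra.
rewrite S_INR /=.
have Hy : 0 <= INR y * (INR y - 1) * (INR y - 2).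
{ case: y {IH} => [|[|[|y]]]; rewrite ?S_INR /=; try lra.
  have := pos_INR y. move=> h.
  apply Rmult_le_pos; [apply Rmult_le_pos|]; lra. }
have H4 : 0 <= INR y * (INR y - 1) * (INR y - 2) / 6 * t^4.
{ apply Rmult_le_pos. lra. apply pow_le. lra. }
have : (1 - t) * (1 - INR y * t + INR y * (INR y - 1) / 2 * t^2
    - INR y * (INR y - 1) * (INR y - 2) / 6 * t^3) <= (1 - t) * (1 - t) ^ y.
  apply Rmult_le_compat_l; lra.
nra.
Qed.

Lemma Pbound (x y : nat) (d : R) : (1 <= x)%N -> (2 <= y)%N -> 0 <= d <= 1 ->
  1/2 <= (1 + d / INR x) ^ x * (1 - d / INR y) ^ y.
Proof.
move=> Hx Hy Hd.
have HX : 1 <= INR x by (apply: (le_INR 1); apply/leP).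
have HY : 2 <= INR y by (apply: (le_INR 2); apply/leP).
have A : 1 + d <= (1 + d / INR x) ^ x.
{ have := bern (d / INR x) x. have -> : INR x * (d / INR x) = d by field; lra.
  apply. apply Rdiv_le_0_compat; lra. }
have B : 1 - d + d^2/4 <= (1 - d / INR y) ^ y.
{ have := bonf (d / INR y) y.
  have Ht : 0 <= d / INR y <= 1.
  { split. apply Rdiv_le_0_compat; lra.
    apply Rmult_le_reg_r with (INR y). lra. field_simplify; lra. }
  move=> /(_ Ht) H. apply: Rle_trans H.
  set Y := INR y in HY *.
  have -> : 1 - Y * (d / Y) + Y * (Y - 1) / 2 * (d / Y) ^ 2 -
    Y * (Y - 1) * (Y - 2) / 6 * (d / Y) ^ 3 =
    1 - d + d^2 * ((Y - 1) / (2 * Y) - (Y - 1) * (Y - 2) * d / (6 * Y^2)) by field; lra.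
  have K : 1/4 <= (Y - 1) / (2 * Y) - (Y - 1) * (Y - 2) * d / (6 * Y^2).
  { have -> : (Y - 1) / (2 * Y) - (Y - 1) * (Y - 2) * d / (6 * Y^2) =
       (3 * Y * (Y - 1) - (Y - 1) * (Y - 2) * d) / (6 * Y^2) by field; lra.
    have Q0 : 0 <= (Y - 1) * (Y - 2) * (1 - d) by apply Rmult_le_pos; nra.
    have Q : 3/2 * Y^2 <= 3 * Y * (Y - 1) - (Y - 1) * (Y - 2) * d by nra.
    have HY2 : 0 < / (6 * Y^2) by apply Rinv_0_lt_compat; nra.
    apply Rle_trans with (3/2 * Y^2 * / (6 * Y^2)).
      right. field. lra.
    rewrite /Rdiv. apply Rmult_le_compat_r; lra. }
  have : d^2 * (1/4) <= d^2 * ((Y - 1) / (2 * Y) - (Y - 1) * (Y - 2) * d / (6 * Y^2)).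
    apply Rmult_le_compat_l => //. nra.
  lra. }
have C : 0 <= 1 - d + d^2/4 by nra.
apply Rle_trans with ((1 + d) * (1 - d + d^2/4)).
  have : 0 <= (1 - d) * (2 + 2 * d - d^2) by apply Rmult_le_pos; nra.
  nra.
apply Rmult_le_compat; lra.
Qed.

Lemma F_sq (x m y l : nat) : (1 <= x)%N -> (1 <= y)%N ->
 (INR (x+m)`! * INR (y+l)`! * INR (x+y)`! * (INR (x+m+y+l) ^ m * INR (x+m+y+l) ^ l) /
   (INR x`! * INR y`! * INR (x+m+y+l)`! * INR (x+m) ^ m * INR (y+l) ^ l)) ^ 2 =
 Phi (x+m) * Phi (y+l) * Phi (x+y) / (Phi x * Phi y * Phi (x+m+y+l)) *
 (INR (x+m) * INR (y+l) * INR (x+y) / (INR x * INR y * INR (x+m+y+l))) *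
 ((INR (x+m) * INR (x+y) / (INR (x+m+y+l) * INR x)) ^ x *
  (INR (y+l) * INR (x+y) / (INR (x+m+y+l) * INR y)) ^ y) ^ 2.
Proof.
move=> Hx Hy.
have Hx0 : INR x <> 0 by apply not_0_INR; lia.
have Hy0 : INR y <> 0 by apply not_0_INR; lia.
have HN0 : INR (x+m+y+l) <> 0 by apply not_0_INR; lia.
rewrite !powdiv; try (apply Rmult_integral_contrapositive; split => //).
rewrite !Rpow_mult_distr.
rewrite /Phi.
have -> : (2 * (x + m) + 1 = x + x + (m + m) + 1)%N by lia.
have -> : (2 * (y + l) + 1 = y + y + (l + l) + 1)%N by lia.
have -> : (2 * (x + y) + 1 = x + x + (y + y) + 1)%N by lia.
have -> : (2 * (x + m + y + l) + 1 = x + x + (m + m) + (y + y) + (l + l) + 1)%N by lia.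
have -> : (2 * x + 1 = x + x + 1)%N by lia.
have -> : (2 * y + 1 = y + y + 1)%N by lia.
rewrite !pow_add.
have E2 : forall a b, exp (2 * (a + b)) = exp (2 * a) * exp (2 * b).
  move=> a b. by rewrite Rmult_plus_distr_l exp_plus.
rewrite !plus_INR in HN0 *.
rewrite !E2.
2: { nz; try apply fact_ne0; apply pow_nonzero; apply not_0_INR; lia. }
2: { apply pow_nonzero; apply not_0_INR; lia. }
have ha : 1 <= INR x by (apply: (le_INR 1); apply/leP).
have hc : 1 <= INR y by (apply: (le_INR 1); apply/leP).
have hb := pos_INR m. have hd := pos_INR l.
have f1 := fact_ne0 (x+m). have f2 := fact_ne0 (y+l). have f3 := fact_ne0 (x+y).
have f4 := fact_ne0 x. have f5 := fact_ne0 y. have f6 := fact_ne0 (x+m+y+l).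
move: f1 f2 f3 f4 f5 f6.
move: (INR (x+m)`!) (INR (y+l)`!) (INR (x+y)`!) (INR x`!) (INR y`!) (INR (x+m+y+l)`!).
move=> F1 F2 F3 F4 F5 F6 f1 f2 f3 f4 f5 f6.
have e1 := exp_pos (2 * INR x). have e2 := exp_pos (2 * INR m).
have e3 := exp_pos (2 * INR y). have e4 := exp_pos (2 * INR l).
move: e1 e2 e3 e4.
move: (exp (2 * INR x)) (exp (2 * INR m)) (exp (2 * INR y)) (exp (2 * INR l)).
move=> E1 E3 E5 E7 e1 e2 e3 e4.
move: ha hb hc hd HN0 Hx0 Hy0. move: (INR x) (INR m) (INR y) (INR l).
move=> a b c d ha hb hc hd HN0 Hx0 Hy0.
clear HN0 Hx0 Hy0.
have q1 : a + b > 0 by lra.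
have q2 : c + d > 0 by lra.
have q3 : a + c > 0 by lra.
have q4 : a + b + c + d > 0 by lra.
have q5 : a > 0 by lra.
have q6 : c > 0 by lra.
clear ha hb hc hd.
have p1 : (a+b)^x <> 0 by apply pow_nonzero, Rgt_not_eq, q1.
have p2 : (a+b)^m <> 0 by apply pow_nonzero, Rgt_not_eq, q1.
have p3 : (c+d)^y <> 0 by apply pow_nonzero, Rgt_not_eq, q2.
have p4 : (c+d)^l <> 0 by apply pow_nonzero, Rgt_not_eq, q2.
have p5 : (a+c)^x <> 0 by apply pow_nonzero, Rgt_not_eq, q3.
have p6 : (a+c)^y <> 0 by apply pow_nonzero, Rgt_not_eq, q3.
have p7 : (a+b+c+d)^x <> 0 by apply pow_nonzero, Rgt_not_eq, q4.
have p8 : (a+b+c+d)^m <> 0 by apply pow_nonzero, Rgt_not_eq, q4.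
have p9 : (a+b+c+d)^y <> 0 by apply pow_nonzero, Rgt_not_eq, q4.
have p10 : (a+b+c+d)^l <> 0 by apply pow_nonzero, Rgt_not_eq, q4.
have p11 : a^x <> 0 by apply pow_nonzero, Rgt_not_eq, q5.
have p12 : c^y <> 0 by apply pow_nonzero, Rgt_not_eq, q6.
move: p1 p2 p3 p4 p5 p6 p7 p8 p9 p10 p11 p12.
move: ((a+b)^x) ((a+b)^m) ((c+d)^y) ((c+d)^l) ((a+c)^x) ((a+c)^y) ((a+b+c+d)^x) ((a+b+c+d)^m) ((a+b+c+d)^y) ((a+b+c+d)^l) (a^x) (c^y).
move=> P1 P2 P3 P4 P5 P6 P7 P8 P9 P10 P11 P12 p1 p2 p3 p4 p5 p6 p7 p8 p9 p10 p11 p12.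
field. repeat split; try assumption; apply Rgt_not_eq; assumption.
Qed.

Lemma core (x m y l : nat) : (2 <= x)%N -> (2 <= y)%N ->
  0 <= INR m - INR (x+m) * INR (m+l) / INR (x+m+y+l) <= 1 ->
  exp (- (1 / 8)) / 2 *
    sqrt (INR (x+m) * INR (y+l) * INR (x+y) / (INR x * INR y * INR (x+m+y+l)))
  <= hyp_pmf (x+m+y+l) (x+m) (m+l) m / bin_pmf (m+l) (INR (x+m) / INR (x+m+y+l)) m.
Proof.
move=> Hx Hy Hd.
have Hx1 : (1 <= x)%N by apply: leq_trans Hx.
have Hy1 : (1 <= y)%N by apply: leq_trans Hy.
have HX : 2 <= INR x by (apply: (le_INR 2); apply/leP).
have HY : 2 <= INR y by (apply: (le_INR 2); apply/leP).
have hm := pos_INR m. have hl := pos_INR l.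
rewrite F_eq //.
match goal with |- _ <= ?r => set F := r end.
have Fpos : 0 <= F.
{ rewrite /F. apply Rdiv_le_0_compat.
  - repeat apply Rmult_le_pos; try apply pos_INR; apply pow_le; apply pos_INR.
  - repeat apply Rmult_lt_0_compat; try (apply lt_0_INR; apply/ltP; apply fact_gt0);
    apply pow_lt; apply lt_0_INR; lia. }
have Fsq := F_sq x m y l Hx1 Hy1. rewrite -/F in Fsq.
set Q := INR (x + m) * INR (y + l) * INR (x + y) / (INR x * INR y * INR (x + m + y + l)) in Fsq *.
have Qpos : 0 <= Q.
{ rewrite /Q. apply Rdiv_le_0_compat.
  repeat apply Rmult_le_pos; apply pos_INR.
  repeat apply Rmult_lt_0_compat; apply lt_0_INR; lia. }
have PX := Phi_pos x Hx1. have PY := Phi_pos y Hy1.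
have PN := Phi_pos (x+m+y+l) ltac:(lia).
have PXm := Phi_pos (x+m) ltac:(lia). have PYl := Phi_pos (y+l) ltac:(lia).
have PZ := Phi_pos (x+y) ltac:(lia).
have R1 : Phi x * exp (- (1/8)) <= Phi (x+m).
{ apply Rle_trans with (Phi x * exp (- / (4 * INR x))); last by apply Phi_inc_chain'.
  apply Rmult_le_compat_l; first lra. apply exp_mono.
  have : / (4 * INR x) <= / 8 by apply Rinv_le_contravar; lra. lra. }
have R2 : Phi y * exp (- (1/8)) <= Phi (y+l).
{ apply Rle_trans with (Phi y * exp (- / (4 * INR y))); last by apply Phi_inc_chain'.
  apply Rmult_le_compat_l; first lra. apply exp_mono.
  have : / (4 * INR y) <= / 8 by apply Rinv_le_contravar; lra. lra. }
have R3 : Phi (x+m+y+l) <= Phi (x+y).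
{ have -> : (x+m+y+l = (x+y)+(m+l))%N by lia. apply Phi_dec_chain. lia. }
have e8 := exp_pos (- (1/8)).
have Rat : exp (- (1/8)) * exp (- (1/8)) <=
   Phi (x+m) * Phi (y+l) * Phi (x+y) / (Phi x * Phi y * Phi (x+m+y+l)).
{ have -> : Phi (x+m) * Phi (y+l) * Phi (x+y) / (Phi x * Phi y * Phi (x+m+y+l)) =
     (Phi (x+m) / Phi x) * (Phi (y+l) / Phi y) * (Phi (x+y) / Phi (x+m+y+l)).
    field. repeat split; apply Rgt_not_eq; assumption.
  have A1 : exp (- (1/8)) <= Phi (x+m) / Phi x.
    apply Rmult_le_reg_r with (Phi x) => //. rewrite /Rdiv Rmult_assoc Rinv_l ?Rmult_1_r; [lra | apply Rgt_not_eq; lra].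
  have A2 : exp (- (1/8)) <= Phi (y+l) / Phi y.
    apply Rmult_le_reg_r with (Phi y) => //. rewrite /Rdiv Rmult_assoc Rinv_l ?Rmult_1_r; [lra | apply Rgt_not_eq; lra].
  have A3 : 1 <= Phi (x+y) / Phi (x+m+y+l).
    apply Rmult_le_reg_r with (Phi (x+m+y+l)) => //. rewrite /Rdiv Rmult_assoc Rinv_l ?Rmult_1_r; [lra | apply Rgt_not_eq; lra].
  have : exp (- (1/8)) * exp (- (1/8)) <= Phi (x+m) / Phi x * (Phi (y+l) / Phi y).
    apply Rmult_le_compat; lra.
  nra. }
set d := INR m - INR (x+m) * INR (m+l) / INR (x+m+y+l) in Hd.
have HN : INR (x + m + y + l) <> 0 by apply not_0_INR; lia.
have B1 : INR (x+m) * INR (x+y) / (INR (x+m+y+l) * INR x) = 1 + d / INR x.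
{ rewrite /d. have HN' := HN. rewrite !plus_INR in HN' *. field. split; lra. }
have B2 : INR (y+l) * INR (x+y) / (INR (x+m+y+l) * INR y) = 1 - d / INR y.
{ rewrite /d. have HN' := HN. rewrite !plus_INR in HN' *. field. split; lra. }
rewrite B1 B2 in Fsq.
have PB := Pbound x y d Hx1 Hy Hd.
set P := (1 + d / INR x) ^ x * (1 - d / INR y) ^ y in Fsq PB.
have Fsq' : (exp (- (1 / 8)) / 2) ^ 2 * Q <= F ^ 2.
{ rewrite Fsq.
  have HP2 : 1/4 <= P^2 by nra.
  have E : (exp (- (1 / 8)) / 2) ^ 2 * Q = (exp (- (1/8)) * exp (- (1/8))) * Q * (1/4) by field.
  rewrite E.
  apply Rmult_le_compat; try nra.
  all: try (apply Rmult_le_compat; nra). }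
rewrite -(sqrt_pow2 F Fpos).
have -> : exp (- (1 / 8)) / 2 * sqrt Q = sqrt ((exp (- (1 / 8)) / 2) ^ 2 * Q).
{ rewrite sqrt_mult_alt; last by apply pow2_ge_0.
  rewrite sqrt_pow2 //. lra. }
apply sqrt_le_1_alt. exact Fsq'.
Qed.

Theorem lemma4 (n i k m : nat) :
  (1 <= n)%N ->
  (1 <= i <= n)%N -> (1 <= k <= n)%N ->
  (2 <= m)%N -> (m + 2 <= minn i k)%N ->
  INR m - 1 < INR i * INR k / INR n <= INR m ->
  (INR n - INR i) * (INR n - INR k) / INR n > 1 ->
  hyp_pmf n i k m / bin_pmf k (INR i / INR n) m >=
    exp (- (1 / 8)) / 2 *
    sqrt (INR i * (INR n - INR i) * (INR n - INR k) /
          ((INR i - INR m) * (INR n - INR i - INR k + INR m) * INR n)).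
Proof.
move=> Hn /andP [Hi1 Hin] /andP [Hk1 Hkn] Hm Hmin H1 H2.
have Hmi : (m + 2 <= i)%N by move: Hmin; rewrite leq_min => /andP [].
have Hmk : (m + 2 <= k)%N by move: Hmin; rewrite leq_min => /andP [].
have HnR : 1 <= INR n by (apply: (le_INR 1); apply/leP).
have Hnik : (i + k + 2 <= n + m)%N.
{ have E : INR n - INR i - INR k + INR i * INR k / INR n =
           (INR n - INR i) * (INR n - INR k) / INR n by field; lra.
  have : INR (i + k + 1) < INR (n + m) by rewrite !plus_INR /=; lra.
  move/INR_lt/ltP. lia. }
have [x Ex] : exists x, i = (x + m)%N by exists (i - m)%N; lia.
have [l El] : exists l, k = (m + l)%N by exists (k - m)%N; lia.
have [y Ey] : exists y, n = (x + m + y + l)%N by exists (n + m - i - k)%N; lia.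
subst i k n.
apply Rle_ge.
have -> : INR (x + m) * (INR (x + m + y + l) - INR (x + m)) * (INR (x + m + y + l) - INR (m + l)) /
    ((INR (x + m) - INR m) * (INR (x + m + y + l) - INR (x + m) - INR (m + l) + INR m) *
     INR (x + m + y + l)) =
    INR (x + m) * INR (y + l) * INR (x + y) / (INR x * INR y * INR (x + m + y + l)).
{ rewrite /Rdiv. f_equal; rewrite !plus_INR; [ring | f_equal; ring]. }
apply core; try lia.
split; lra.
Qed.
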